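(* Let $I$ be a non-empty finite set of positive integers, let $\lambda=\lambda^I$, let $s=\lambda_1-1$, and let $(C_0,C_1,\ldots,C_s)$ be the Naruse-Newton coefficients of $I$. If for some positive integer $i\le s$ it holds that $\lambda'_{i+1}=\lambda'_{s+1}=2$, then $$\frac{C_0}{0!}=\frac{C_1}{1!}=\cdots=\frac{C_{s-i+1}}{(s-i+1)!}.$$
   Context: Partitions are drawn as Young diagrams $\mathbb{D}(\lambda)$ in English notation; $c_{i,j}$ is the cell in row $i$ and column $j$; $\lambda'$ is the conjugate partition ($\lambda'_j$ is the number of cells in column $j$). The hook length $h_\lambda(c)$ of a cell $c$ is the number of cells of $\mathbb{D}(\lambda)$ weakly to the right of $c$ in its row or weakly below $c$ in its column (counting $c$ once). For partitions $\mu\subseteq\lambda$, an excited diagram of $\lambda/\mu$ is any subset of $\mathbb{D}(\lambda)$ obtained from $\mathbb{D}(\mu)$ by repeatedly applying the move: replace a cell $c_{i,j}\in D$ by $c_{i+1,j+1}$, allowed iff $c_{i+1,j+1}\in\mathbb{D}(\lambda)$ and none of $c_{i,j+1},c_{i+1,j},c_{i+1,j+1}$ lies in $D$; $\mathbb{E}(\lambda/\mu)$ denotes the set of excited diagrams. Ribbons and descent sets: a ribbon with $n$ cells is read from its lower-left cell to its upper-right cell, each successive cell being directly to the right of or directly above the previous one; it corresponds to the set of $i\in\{1,\ldots,n-1\}$ such that cell $i$ is directly below cell $i+1$ (this is the common descent set of all permutations read off from its standard fillings). For a non-empty finite set $I$ of positive integers, $\lambda^I$ is the unique partition with $\lambda^I_1=\lambda^I_2$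 such that the set of cells $c_{i,j}\in\mathbb{D}(\lambda^I)$ having fewer than three of $c_{i,j+1},c_{i+1,j},c_{i+1,j+1}$ in $\mathbb{D}(\lambda^I)$ is a ribbon (of $\max I+1$ cells) corresponding to $I$; this ribbon equals $\mathbb{D}(\lambda^I)\setminus\mathbb{D}(\mu^I)$ for a partition $\mu^I$. Put $s=s(I)=\lambda^I_1-1$. Naruse-Newton coefficients: every excited diagram $D$ of $\lambda^I/\mu^I$ meets the first row in a set $\{c_{1,1},\ldots,c_{1,r}\}$ with $0\le r\le s$. For $0\le j\le s$, $$C_j=C_j(I)=\sum_{D}\ \prod_{c\in D,\ c\text{ not in row }1} h_{\lambda^I}(c),$$ the sum over all $D\in\mathbb{E}(\lambda^I/\mu^I)$ having exactly $s-j$ cells in the first row. (These are the coefficients of the excitation factor of the ribbon in the Naruse-Newton basis.) Example: $I=\{1,3,5\}$ gives $\lambda^I=(3,3,2,1)$, $s=2$, $(C_0,C_1,C_2)=(6,6,3)$. *)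

(* Defs.v *)
From HB Require Import structures.
From mathcomp Require Import all_boot all_order all_algebra.
From mathcomp Require Import finmap.
From mathcomp Require Import boolp.

Set Implicit Arguments.
Unset Strict Implicit.
Unset Printing Implicit Defensive.

Local Open Scope fset_scope.

(* A partition is a weakly decreasing sequence of positive integers;
   lambda_i is [nth 0 la i.-1] (rows are 1-indexed). *)
Definition is_partition (la : seq nat) : bool :=
  sorted geq la && all (fun x => 0 < x) la.

(* A cell c_{i,j} is the pair (i, j), 1-indexed, English notation. *)
Definition in_diag (la : seq nat) (c : nat * nat) : bool :=
  [&& 0 < c.1, 0 < c.2 & c.2 <= nth 0 la c.1.-1].

Definition diagram (la : seq nat) : {fset nat * nat} :=
  [fset c in [seq (i, j) | i <- iota 1 (size la), j <- iota 1 (nth 0 la i.-1)]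
     | in_diag la c].

Definition conj_part (la : seq nat) (j : nat) : nat :=
  count (fun x => j <= x) la.

Definition hook (la : seq nat) (c : nat * nat) : nat :=
  ((nth 0 la c.1.-1 - c.2) + (conj_part la c.2 - c.1) + 1)%N.

Definition outer_cells (la : seq nat) : {fset nat * nat} :=
  [fset c in diagram la |
     (((c.1, c.2.+1) \in diagram la) + ((c.1.+1, c.2) \in diagram la)
       + ((c.1.+1, c.2.+1) \in diagram la) < 3)%N].

(* The ribbon with max I + 1 cells corresponding to I, placed in the plane
   with offsets (a, b): cell k (k = 1 .. max I + 1) sits in row
   a + #{m in I | k <= m} and column b + #{1 <= m < k | m \notin I}; thus
   cell k+1 is directly above cell k iff k \in I, and directly to its right
   otherwise.  Every placement of the ribbon is obtained for some a, b. *)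
Definition maxI (I : {fset nat}) : nat := \max_(m <- I) m.

Definition ribbon_cell (I : {fset nat}) (a b k : nat) : nat * nat :=
  ((a + #|` [fset m in I | k <= m]|)%N,
   (b + count (fun m => m \notin I) (iota 1 k.-1))%N).

Definition ribbon (I : {fset nat}) (a b : nat) : {fset nat * nat} :=
  [fset ribbon_cell I a b k | k in iota 1 (maxI I).+1].

Definition is_lambdaI (I : {fset nat}) (la : seq nat) : Prop :=
  [/\ is_partition la, nth 0 la 0 = nth 0 la 1
    & exists a b, outer_cells la = ribbon I a b].

Definition mu_cells (la : seq nat) : {fset nat * nat} :=
  diagram la `\` outer_cells la.

Definition excite_step (la : seq nat) (D D' : {fset nat * nat}) : Prop :=
  exists i j, [/\ (i, j) \in D, (i.+1, j.+1) \in diagram la,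
     [&& (i, j.+1) \notin D, (i.+1, j) \notin D & (i.+1, j.+1) \notin D]
     & D' = ((i.+1, j.+1) |` (D `\ (i, j)))%fset].

Inductive excited_from (la : seq nat) (D0 : {fset nat * nat}) :
  {fset nat * nat} -> Prop :=
| ex_refl : excited_from la D0 D0
| ex_step D D' : excited_from la D0 D -> excite_step la D D' ->
    excited_from la D0 D'.

Definition excited_diagrams (la : seq nat) (D0 : {fset nat * nat}) :
  {fset {fset nat * nat}} :=
  [fset D in fpowerset (diagram la) | `[< excited_from la D0 D >]].

Definition first_row_count (D : {fset nat * nat}) : nat :=
  #|` [fset c in D | c.1 == 1%N]|.

Definition s_of (la : seq nat) : nat := (nth 0 la 0).-1.

Definition NN_coeff (la : seq nat) (j : nat) : nat :=
  (\sum_(D <- excited_diagrams la (mu_cells la)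
          | first_row_count D == s_of la - j)
     \prod_(c <- D | c.1 != 1) hook la c)%N.

(* Main.v *)
Require Import Defs.
From HB Require Import structures.
From mathcomp Require Import all_boot all_order all_algebra.
From mathcomp Require Import finmap.
Import GRing.Theory Num.Theory.
From mathcomp Require Import boolp zify.
Local Open Scope fset_scope.
Set Implicit Arguments.
Unset Strict Implicit.

Definition row1s (s m : nat) : seq (nat*nat) := [seq (1,j) | j <- iota 1 (s-m)].
Definition row2s (s m : nat) : seq (nat*nat) := [seq (2,j) | j <- iota (s-m).+2 m].
Definition TT (s m : nat) : {fset nat*nat} := [fset x in row1s s m ++ row2s s m].

Lemma mem_rows (r : nat) (l : seq nat) (c : nat * nat) :
  (c \in [seq (r,j) | j <- l]) = (c.1 == r) && (c.2 \in l).
Proof.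
case: c => a b /=; apply/mapP/andP => [[j jl [-> ->]]|[/eqP -> bl]]; first by [].
by exists b.
Qed.

Lemma memTT s m a b : ((a,b) \in TT s m) =
  ((a == 1) && (1 <= b <= s - m)) || ((a == 2) && ((s-m).+2 <= b < (s-m).+2 + m)).
Proof. by rewrite !inE /= !mem_rows !mem_iota /= add1n. Qed.

Lemma mem_diagram la c : (c \in diagram la) = in_diag la c.
Proof.
rewrite !inE /= andb_idl //; case: c => a b /and3P [/= a0 b0 bl].
apply/allpairsPdep; exists a, b; split => //; rewrite mem_iota.
  rewrite a0 /= add1n ltnS; case: (leqP a (size la)) => // H.
  move: bl; rewrite nth_default; lia.
by rewrite b0 /= add1n ltnS.
Qed.


Definition Hyp (la : seq nat) (s i : nat) :=
  [/\ nth 0 la 0 = s.+1, nth 0 la 1 = s.+1, nth 0 la 2 <= i, 0 < i <= s &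
      forall c, i < c <= s.+1 -> conj_part la c = 2].

Definition Lp (i : nat) (L : {fset nat * nat}) : Prop :=
  forall x, x \in L -> 2 <= x.1 /\ (x.1 = 2 -> x.2 < i).

Lemma disjT s i m L x : 0 < i <= s -> m <= s - i + 1 -> Lp i L -> x \in L -> x \notin TT s m.
Proof.
move=> Hi Hm HL /HL; case: x => a b /= [Ha Hb]; rewrite memTT.
case: (a =P 2) Hb => [-> /(_ erefl) Hb | Ha2 _]; first by lia.
by lia.
Qed.

Lemma frcT s i m L : m <= s -> Lp i L -> first_row_count (TT s m `|` L) = s - m.
Proof.
move=> Hm HL; rewrite /first_row_count.
have -> : [fset c in TT s m `|` L | c.1 == 1] = [fset x in row1s s m].
  apply/fsetP => -[a b]; rewrite !inE /= !mem_rows !mem_iota /=.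
  case hL: ((a, b) \in L); first by have [] := HL _ hL; rewrite /=; lia.
  by lia.
rewrite card_fseq undup_id ?size_map ?size_iota //.
by rewrite map_inj_uniq ?iota_uniq // => x y [].
Qed.

Lemma shiftT s i m L : m < s -> Lp i L ->
  (2, (s - m).+1) |` ((TT s m `|` L) `\ (1, s - m)) = TT s m.+1 `|` L.
Proof.
move=> Hm HL; apply/fsetP => -[a b]; rewrite !inE /= !mem_rows !mem_iota /= !xpair_eqE.
case hL: ((a, b) \in L); first by have [] := HL _ hL; rewrite /=; lia.
by lia.
Qed.

Lemma mem_mu la c : (c \in mu_cells la) =
  [&& c \in diagram la, (c.1, c.2.+1) \in diagram la, (c.1.+1, c.2) \in diagram la
    & (c.1.+1, c.2.+1) \in diagram la].
Proof.
rewrite /mu_cells /outer_cells; move: (diagram la) => Dg; rewrite !inE /=.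
case: (c \in Dg); case: ((c.1, c.2.+1) \in Dg);
  case: ((c.1.+1, c.2) \in Dg); by case: ((c.1.+1, c.2.+1) \in Dg).
Qed.

Lemma reach_sub la E : excited_from la (mu_cells la) E -> E `<=` diagram la.
Proof.
elim => [|D D' _ IH [a [b [Hab Hd _ ->]]]].
  by apply/fsubsetP => x; rewrite mem_mu => /andP[].
apply/fsubsetP => x; rewrite in_fsetU in_fset1 in_fsetD1 => /orP[/eqP -> //|/andP[_ Hx]].
exact: (fsubsetP IH).
Qed.

Lemma frc_step la D D' : D `<=` diagram la -> excite_step la D D' ->
  first_row_count D' <= first_row_count D.
Proof.
move=> Hs [a [b [Hab Hd _ ->]]]; rewrite /first_row_count; apply: fsubset_leq_card.
apply/fsubsetP => -[x y]; rewrite !inE /= => /andP[H Hx1]; rewrite Hx1 andbT.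
move: H => /orP[/eqP[Ex Ey]|/andP[_ H]]; last by [].
subst; move: Hx1; have := fsubsetP Hs _ Hab; rewrite mem_diagram /in_diag /=; lia.
Qed.

Lemma mu_split la s i : Hyp la s i ->
  mu_cells la = TT s 0 `|` (mu_cells la `\` TT s 0) /\ Lp i (mu_cells la `\` TT s 0).
Proof.
move=> [H1 H2 H3 Hi _]; split.
  apply/fsetP => x; rewrite in_fsetU in_fsetD.
  case hT: (x \in TT s 0) => //=; move: hT; case: x => a b.
  rewrite memTT mem_mu !mem_diagram /in_diag /= => hT; apply/esym.
  have -> : a = 1 by lia.
  by rewrite /= H1 H2; lia.
move=> [a b]; rewrite in_fsetD memTT mem_mu !mem_diagram /in_diag /=.
case: a => [|[|[|a]]] /=; rewrite ?H1 ?H2; lia.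
Qed.

Lemma notinL i L a b : Lp i L -> (a < 2 \/ (a = 2 /\ i <= b)) -> (a, b) \notin L.
Proof.
move=> HL Hab; apply/negP => /HL /= [h1 h2]; case: Hab => [|[Ha Hb]]; first by lia.
by have := h2 Ha; lia.
Qed.

Lemma moveL (T L : {fset nat * nat}) a b : (a, b) \notin T ->
  (a.+1, b.+1) |` ((T `|` L) `\ (a, b)) = T `|` ((a.+1, b.+1) |` (L `\ (a, b))).
Proof.
move=> hT; apply/fsetP => x; rewrite !(in_fsetU, in_fset1, in_fsetD1).
case: (x =P (a, b)) => [->|_] /=; first by rewrite (negbTE hT).
by case: (x \in T); case: (x \in L); case: (x == _).
Qed.

Lemma mainL la s i E : Hyp la s i -> excited_from la (mu_cells la) E ->
  i.-1 <= first_row_count E ->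
  exists m L, [/\ m <= s - i + 1, E = TT s m `|` L, Lp i L
                & excited_from la (mu_cells la) (TT s 0 `|` L)].
Proof.
move=> Hy; have [H1 H2 H3 Hi _] := Hy.
elim => [|D D' HD IH Hst] Hc.
  have [Hmu HL] := mu_split Hy.
  exists 0, (mu_cells la `\` TT s 0); split; [lia | exact: Hmu | exact: HL |].
  by rewrite -Hmu; apply: ex_refl.
have Hsub := reach_sub HD.
have [m [L [Hm ED HL HF]]] := IH (leq_trans Hc (frc_step Hsub Hst)).
subst D; case: Hst => [a [b [Hab Hd /and3P [Hn1 Hn2 Hn3] ED']]]; subst D'.
move: Hab; rewrite in_fsetU => /orP [hT|hL]; last first.
  have [ha2 _] := HL _ hL; rewrite /= in ha2.
  exists m, ((a.+1, b.+1) |` (L `\ (a, b))); split => //.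
  - by rewrite moveL //; exact: (disjT Hi Hm HL hL).
  - move=> x; rewrite in_fsetU in_fset1 in_fsetD1 => /orP [/eqP -> /=|/andP [_ /HL] //].
    by split; lia.
  - apply: ex_step HF _; exists a, b; split.
    + by rewrite in_fsetU hL orbT.
    + exact: Hd.
    + move: Hn1 Hn2 Hn3; rewrite !in_fsetU !negb_or => /andP[_ ->] /andP[_ ->] /andP[_ ->].
      by rewrite !memTT; lia.
    + rewrite moveL // memTT; lia.
move: hT; rewrite memTT => hT.
have ha : a = 1.
  move: Hd hT; rewrite mem_diagram /in_diag /=; case: (a =P 2) => [-> /=|]; last by lia.
  by lia.
subst a.
move: Hn1; rewrite in_fsetU memTT negb_or => /andP [hn _].
have Eb : b = s - m by lia.
subst b.
have Hms : m < s by lia.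
have E2 := shiftT Hms HL.
rewrite E2 in Hc *.
exists m.+1, L; split => //.
rewrite (frcT (m := m.+1) _ HL) in Hc; lia.
Qed.

Lemma fwdL la s i L k : Hyp la s i -> Lp i L ->
  excited_from la (mu_cells la) (TT s 0 `|` L) -> k <= s - i + 1 ->
  excited_from la (mu_cells la) (TT s k `|` L).
Proof.
move=> [H1 H2 H3 Hi _] HL HF; elim: k => // k IH Hk.
apply: ex_step (IH (ltnW Hk)) _; exists 1, (s - k); split.
- by rewrite in_fsetU memTT; apply/orP; left; lia.
- by rewrite mem_diagram /in_diag /= H2; lia.
- have n1 : (1, (s-k).+1) \notin L by apply: (notinL HL); left.
  have n2 : (2, s-k) \notin L by apply: (notinL HL); right; split => //; lia.
  have n3 : (2, (s-k).+1) \notin L by apply: (notinL HL); right; split => //; lia.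
  rewrite !in_fsetU !negb_or !memTT n1 n2 n3 /=; lia.
- rewrite (shiftT _ HL) //; lia.
Qed.

Lemma prod_iota a k : \prod_(j <- iota a k) (a + k - j) = k`!.
Proof.
elim: k a => [|k IH] a; first by rewrite big_nil.
rewrite /= big_cons factS -(IH a.+1); congr (_ * _); first by lia.
by apply: eq_bigr => j _; rewrite addnS addSn.
Qed.

Lemma big_fseq (F : nat * nat -> nat) (r : seq (nat * nat)) : uniq r ->
  \prod_(x <- [fset x in r]) F x = \prod_(x <- r) F x.
Proof.
move=> ur; apply: perm_big; apply: uniq_perm => // x; by rewrite inE.
Qed.

Lemma weightL la s i k L : Hyp la s i -> Lp i L -> k <= s - i + 1 ->
  \prod_(c <- TT s k `|` L | c.1 != 1) hook la c = k`! * \prod_(c <- L) hook la c.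
Proof.
move=> Hy HL Hk; have [H1 H2 H3 Hi Hc] := Hy.
rewrite (@big_fsetIDcond _ _ _ _ (fun x => x \in TT s k)) /=; congr (_ * _).
  transitivity (\prod_(c <- [fset x in row2s s k]) hook la c).
    apply: eq_fbigl_cond => -[a b]; rewrite !inE /= !mem_rows !mem_iota /=.
    case hL: ((a, b) \in L); last by lia.
    have [/= h1 h2] := HL _ hL; lia.
  rewrite big_fseq; last first.
    by rewrite map_inj_uniq ?iota_uniq // => x y [].
  rewrite big_map -(prod_iota (s - k).+2 k); apply: eq_big_seq => j.
  rewrite mem_iota /hook /= H2 => hj; rewrite Hc; lia.
transitivity (\prod_(c <- L) hook la c); last by [].
apply: eq_fbigl_cond => -[a b]; rewrite !inE /= !mem_rows !mem_iota /=.
case hL: ((a, b) \in L); last by lia.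
have [/= h1 h2] := HL _ hL; lia.
Qed.

Lemma diffT s i m L : 0 < i <= s -> m <= s - i + 1 -> Lp i L ->
  (TT s m `|` L) `\` TT s m = L.
Proof.
move=> Hi Hm HL; apply/fsetP => x; rewrite in_fsetD in_fsetU.
case hx: (x \in L); last by rewrite orbF andNb.
by move: (disjT Hi Hm HL hx) => /negbTE ->.
Qed.

Lemma memX la D0 D : (D \in excited_diagrams la D0) =
  (D `<=` diagram la) && `[< excited_from la D0 D >].
Proof.
by rewrite /excited_diagrams; move: (diagram la) => Dg; rewrite !inE fpowersetE.
Qed.

Lemma charF la s i j F : Hyp la s i -> F \in excited_diagrams la (mu_cells la) ->
  first_row_count F = s - j -> j <= s - i + 1 ->
  exists L, [/\ F = TT s j `|` L, Lp i L & excited_from la (mu_cells la) (TT s 0 `|` L)].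
Proof.
move=> Hy; have [H1 H2 H3 Hi _] := Hy.
rewrite memX => /andP [_ /asboolP HF] hf hj.
have [m [L [Hm EF HL HF0]]] := mainL Hy HF ltac:(rewrite hf; lia).
have hm : m = j by move: hf; rewrite EF (frcT _ HL); lia.
by subst m; exists L.
Qed.

Lemma hyp_of la i : nth 0 la 0 = nth 0 la 1 -> 0 < i <= s_of la ->
  conj_part la i.+1 = 2 -> Hyp la (s_of la) i.
Proof.
rewrite /s_of /conj_part => H01 Hi Hc.
case: la H01 Hi Hc => [|[|x0] [|x1 r]] /=; try lia.
move=> H01 Hi Hc.
have Hr : count (fun x => i.+1 <= x) r = 0 by lia.
split => //; try lia.
- clear Hc; by case: r Hr => //= x2 r; lia.
- move=> c hc; have : count (fun x => c <= x) r <= count (fun x => i.+1 <= x) r.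
    by apply: sub_count => x /=; lia.
  rewrite /conj_part /=; lia.
Qed.

Lemma NN_eq la i k : Hyp la (s_of la) i -> k <= s_of la - i + 1 ->
  NN_coeff la k = k`! * NN_coeff la 0.
Proof.
move=> Hy Hk; have [H1 H2 H3 Hi _] := Hy.
rewrite /NN_coeff subn0 -big_filter -[X in _ * X]big_filter big_distrr.
set X := excited_diagrams la (mu_cells la).
set s := s_of la in Hy Hk H1 H2 H3 Hi *.
pose Phi (D : {fset nat * nat}) := TT s k `|` (D `\` TT s 0).
have Hperm : perm_eq [seq D <- X | first_row_count D == s - k]
                     (map Phi [seq D <- X | first_row_count D == s]).
  apply: uniq_perm.
  - by rewrite filter_uniq // fset_uniq.
  - rewrite map_inj_in_uniq ?filter_uniq ?fset_uniq // => F1 F2.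
    rewrite !mem_filter => /andP [/eqP h1 x1] /andP [/eqP h2 x2].
    have [L1 [E1 HL1 _]] := charF Hy x1 (etrans h1 (esym (subn0 s))) ltac:(lia).
    have [L2 [E2 HL2 _]] := charF Hy x2 (etrans h2 (esym (subn0 s))) ltac:(lia).
    rewrite /Phi E1 E2 (diffT (m := 0) Hi _ HL1) ?(diffT (m := 0) Hi _ HL2); try lia.
    move=> /(congr1 (fun A => A `\` TT s k)).
    by rewrite (diffT Hi Hk HL1) (diffT Hi Hk HL2) => ->.
  - move=> D; rewrite mem_filter; apply/andP/mapP.
    + move=> [/eqP hD xD].
      have [L [ED HL HF]] := charF Hy xD hD Hk.
      exists (TT s 0 `|` L).
        rewrite mem_filter memX (reach_sub HF) (frcT _ HL) ?subn0 //=.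
        by rewrite eqxx; apply/asboolP.
      by rewrite /Phi (diffT (m := 0) Hi _ HL) //; lia.
    + move=> [F]; rewrite mem_filter => /andP [/eqP hF xF] ->.
      have [L [EF HL HF]] := charF Hy xF (etrans hF (esym (subn0 s))) ltac:(lia).
      rewrite /Phi EF (diffT (m := 0) Hi _ HL); last by lia.
      have HFk := fwdL Hy HL HF Hk.
      rewrite (frcT _ HL); last by lia.
      by split; [rewrite eqxx | rewrite /X memX (reach_sub HFk) /=; apply/asboolP].
rewrite (perm_big _ Hperm) big_map; apply: eq_big_seq => F.
rewrite mem_filter => /andP [/eqP hF xF].
have [L [EF HL HF]] := charF Hy xF (etrans hF (esym (subn0 s))) ltac:(lia).
rewrite /Phi EF (diffT (m := 0) Hi _ HL); last by lia.
by rewrite (weightL Hy HL Hk) (weightL Hy HL (k := 0)) ?fact0 ?mul1n //; lia.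
Qed.

Unset Implicit Arguments.
Local Close Scope fset_scope.

Theorem proposition4p3 (I : {fset nat}) (la : seq nat) :
  I != fset0 -> (0 \notin I) -> is_lambdaI I la ->
  forall i : nat, (0 < i <= s_of la)%N ->
  conj_part la i.+1 = 2%N -> conj_part la (s_of la).+1 = 2%N ->
  forall k : nat, (k <= s_of la - i + 1)%N ->
    ((NN_coeff la k)%:R / (k`!)%:R : rat)%R
      = ((NN_coeff la 0)%:R / (0`!)%:R)%R.
Proof.
move=> _ _ [_ H01 _] i Hi Hci _ k Hk.
have Hy := hyp_of H01 Hi Hci.
rewrite (NN_eq Hy Hk) natrM fact0 divr1 mulrC mulKf //.
by rewrite pnatr_eq0 -lt0n fact_gt0.
Qed.
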